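(* Modularity is not relatively monotonic: there exist graphs $G=(V,E)$ and $G'=(V,E')$ on the same node set and clusterings $C,D$ of $V$ such that $G'$ is a $C$-consistent improvement of $G$, $G$ is a $D$-consistent improvement of $G'$, and $Q_{\mathrm{mod}}(G,C)\ge Q_{\mathrm{mod}}(G,D)$, but $Q_{\mathrm{mod}}(G',C)<Q_{\mathrm{mod}}(G',D)$.
   Context: A (symmetric weighted) graph is a pair $G=(V,E)$ of a finite set $V$ and $E:V\times V\to\mathbb{R}_{\ge 0}$ symmetric; self loops allowed. A clustering is a partition of $V$ into nonempty disjoint clusters; write $i\sim_C j$ if $i,j$ lie in the same cluster of $C$. For $c\subseteq V$, $v_c=\sum_{i\in c}\sum_{j\in V}E(i,j)$ and $w_c=\sum_{i,j\in c}E(i,j)$. Modularity: $Q_{\mathrm{mod}}(G,C)=\sum_{c\in C}\left(\frac{w_c}{v_V}-\left(\frac{v_c}{v_V}\right)^2\right)$ (defined when $v_V>0$). A graph $G'=(V,E')$ is a $C$-consistent improvement of $G=(V,E)$ if $E'(i,j)\ge E(i,j)$ whenever $i\sim_C j$ and $E'(i,j)\le E(i,j)$ whenever $i\not\sim_C j$. *)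

(* Defs.v *)
From HB Require Import structures.
From mathcomp Require Import all_boot all_order all_algebra.
From mathcomp Require Import reals.
Set Implicit Arguments. Unset Strict Implicit. Unset Printing Implicit Defensive.
Import Order.TTheory GRing.Theory Num.Theory.
Local Open Scope ring_scope.

(* A symmetric weighted graph on the finite node set V: nonnegative symmetric
   weight function (self loops allowed). *)
Definition is_graph (R : realType) (V : finType) (E : V -> V -> R) : Prop :=
  (forall i j, 0 <= E i j) /\ (forall i j, E i j = E j i).

Definition is_clustering (V : finType) (C : {set {set V}}) : Prop :=
  partition C [set: V].

Definition same_cluster (V : finType) (C : {set {set V}}) (i j : V) : Prop :=
  exists2 c, c \in C & (i \in c) && (j \in c).

Definition vol (R : realType) (V : finType) (E : V -> V -> R) (c : {set V}) : R :=
  \sum_(i in c) \sum_(j : V) E i j.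

Definition win (R : realType) (V : finType) (E : V -> V -> R) (c : {set V}) : R :=
  \sum_(i in c) \sum_(j in c) E i j.

Definition Qmod (R : realType) (V : finType) (E : V -> V -> R) (C : {set {set V}}) : R :=
  \sum_(c in C) (win E c / vol E [set: V] - (vol E c / vol E [set: V]) ^+ 2).

Definition consistent_improvement (R : realType) (V : finType)
  (C : {set {set V}}) (E E' : V -> V -> R) : Prop :=
  forall i j, (same_cluster C i j -> E i j <= E' i j) /\
              (~ same_cluster C i j -> E' i j <= E i j).

(* Main.v *)
Require Import Defs.
From HB Require Import structures.
From mathcomp Require Import all_boot all_order all_algebra.
From mathcomp Require Import reals ring lra.
Import Order.TTheory GRing.Theory Num.Theory.
Local Open Scope ring_scope.

Definition en (i j : nat) : nat :=
  match i, j with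
  | 0, 0 => 3 | 0, 2 => 1 | 2, 0 => 1 | 1, 2 => 1 | 2, 1 => 1 | _, _ => 0
  end%N.
Definition en' (i j : nat) : nat :=
  match i, j with
  | 0, 0 => 3 | 0, 2 => 1 | 2, 0 => 1 | _, _ => 0
  end%N.

Lemma en_le (i j : 'I_3) : (en' i j <= en i j)%N.
Proof. by case: i => [[|[|[|?]]] ?] //; case: j => [[|[|[|?]]] ?]. Qed.
Lemma en_diag (i : 'I_3) : en' i i = en i i.
Proof. by case: i => [[|[|[|?]]] ?]. Qed.
Lemma en_sym (i j : 'I_3) : en i j = en j i.
Proof. by case: i => [[|[|[|?]]] ?] //; case: j => [[|[|[|?]]] ?]. Qed.
Lemma en'_sym (i j : 'I_3) : en' i j = en' j i.
Proof. by case: i => [[|[|[|?]]] ?] //; case: j => [[|[|[|?]]] ?]. Qed.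

Lemma sumT3 (R : realType) (F : 'I_3 -> R) :
  \sum_(i in [set: 'I_3]) F i = \sum_(i < 3) F i.
Proof. by apply: eq_bigl => i; rewrite in_setT. Qed.

Lemma sameC (i j : 'I_3) :
  same_cluster [set [set x] | x : 'I_3] i j -> i = j.
Proof.
case=> c /imsetP [x _ ->] /andP [].
by rewrite !in_set1 => /eqP -> /eqP ->.
Qed.

Lemma sameD (i j : 'I_3) : same_cluster [set [set: 'I_3]] i j.
Proof. by exists [set: 'I_3]; rewrite ?in_set1 ?in_setT. Qed.

Theorem theorem4 (R : realType) :
  exists (V : finType) (E E' : V -> V -> R) (C D : {set {set V}}),
    is_graph E /\ is_graph E' /\ is_clustering C /\ is_clustering D /\
    0 < vol E [set: V] /\ 0 < vol E' [set: V] /\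
    consistent_improvement C E E' /\ consistent_improvement D E' E /\
    Qmod E D <= Qmod E C /\ Qmod E' C < Qmod E' D.
Proof.
pose E := fun i j : 'I_3 => (en i j)%:R : R.
pose E' := fun i j : 'I_3 => (en' i j)%:R : R.
have volE : vol E [set: 'I_3] = 7%:R.
  rewrite /vol sumT3 !big_ord_recr !big_ord0 /= /E /=; lra.
have volE' : vol E' [set: 'I_3] = 5%:R.
  rewrite /vol sumT3 !big_ord_recr !big_ord0 /= /E' /=; lra.
have QD : forall F : 'I_3 -> 'I_3 -> R, vol F [set: 'I_3] != 0 ->
    Qmod F [set [set: 'I_3]] = 0.
  move=> F hF; rewrite /Qmod big_set1.
  have -> : win F [set: 'I_3] = vol F [set: 'I_3].
    by rewrite /win /vol; apply: eq_bigr => i _; apply: eq_bigl => j; rewrite in_setT.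
  by rewrite divff // expr1n subrr.
have QC : forall F : 'I_3 -> 'I_3 -> R,
    Qmod F [set [set x] | x : 'I_3] =
    \sum_(x < 3) (F x x / vol F [set: 'I_3] -
                  ((\sum_(j < 3) F x j) / vol F [set: 'I_3]) ^+ 2).
  move=> F; rewrite /Qmod big_imset /=; last by move=> x y _ _; apply: set1_inj.
  apply: eq_bigr => x _.
  by rewrite /win /vol !big_set1.
exists ('I_3 : finType), E, E', [set [set x] | x : 'I_3], [set [set: 'I_3]].
split.
  by split=> [i j|i j]; rewrite /E ?ler0n // en_sym.
split.
  by split=> [i j|i j]; rewrite /E' ?ler0n // en'_sym.
split.
  have [hP _] := @indexed_partition 'I_3 'I_3 predT (fun x => [set x])
    (fun i j _ _ hij => ltac:(rewrite disjoints1 in_set1 eq_sym; exact: hij))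
    (fun i _ => ltac:(apply/set0Pn; exists i; exact: set11)).
  have e : cover [set [set x] | x in predT] = [set: 'I_3].
    rewrite cover_imset; apply/setP => x; rewrite in_setT.
    by apply/bigcupP; exists x; rewrite ?in_set1.
  by move: hP; rewrite e.
split.
  rewrite /is_clustering /partition cover1 trivIset1 in_set1 eqxx /=.
  by apply/negP => /eqP/setP/(_ ord0); rewrite in_setT in_set0.
split; first by rewrite volE ltr0n.
split; first by rewrite volE' ltr0n.
split.
  move=> i j; split.
    by move/sameC => <-; rewrite /E /E' en_diag.
  by move=> _; rewrite /E /E' ler_nat en_le.
split.
  move=> i j; split.
    by move=> _; rewrite /E /E' ler_nat en_le.
  by move=> h; exfalso; apply: h; apply: sameD.
split.
  rewrite QD; last by rewrite volE pnatr_eq0.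
  rewrite QC volE !big_ord_recr !big_ord0 /= /E /=.
  rewrite le_eqVlt; apply/orP; left; apply/eqP; by field.
rewrite QD; last by rewrite volE' pnatr_eq0.
rewrite QC volE' !big_ord_recr !big_ord0 /= /E' /=.
rewrite -subr_gt0 sub0r.
set x := (X in - X).
have -> : x = - (2%:R / 25%:R) by rewrite /x; field.
by rewrite opprK divr_gt0 // ltr0n.
Qed.
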